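(* For every ranking profile $R$ over $m$ candidates, the ranking chosen by the Flow-adjusting Borda rule is pair-priceable for $R$. This holds for any choice of maximum flow in each round (the minimization of the cost-per-utility ratio is not needed) and any tie-breaking among Borda maximizers.
   Context: Let $C$ be a set of $m$ candidates. A ranking is a strict linear order over $C$; $\mathcal{R}$ denotes the set of all rankings over $C$. A ranking profile is a function $R:\mathcal{R}\to[0,1]$ with $\sum_\succ R(\succ)=1$. For a ranking $\succ$, $A(\succ)=\{(x,y)\in C\times C:x\succ y\}$. For $x\in X\subseteq C$, $u(\succ,x,X)=|\{y\in X\setminus\{x\}:x\succ y\}|$; for $b:\mathcal{R}\to\mathbb{R}_{\geq0}$, $U(b,x,X)=\sum_\succ b(\succ)u(\succ,x,X)$. Flow-adjusting Borda rule: set $X_1=C$, $b_1(\succ)=R(\succ)\binom{m}{2}$. In round $i=1,\dots,m$: choose $x^*\in\arg\max_{x\in X_i}U(b_i,x,X_i)$, place it at position $i$, set $X_{i+1}=X_i\setminus\{x^*\}$. Build the flow network $G_{x^*}$ with vertices: source $s$, a vertex $v_\succ$ for each $\succ\in\mathcal{R}$, a vertex $v_y$ for each $y\in X_i\setminus\{x^*\}$, sink $t$; edges $(s,v_\succ)$ with capacity $b_i(\succ)$; edges $(v_\succ,v_y)$ with unbounded capacity whenever $x^*\succ y$; edges $(v_y,t)$ with capacity $1$. Let $f$ be a maximum $s$-$t$ flow in $G_{x^*}$ (the rule's default choice is one minimizing $\max_{\succ}\frac{f(s,v_\succ)}{b_i(\succ)u(\succ,x^*,X_i)}$ with $0/0=0$),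 and set $b_{i+1}(\succ)=b_i(\succ)-f(s,v_\succ)$. A ranking $\rhd=x_1,\dots,x_m$ is pair-priceable for $R$ if there is $\pi:\mathcal{R}\times A(\rhd)\to[0,1]$ such that (1) $\pi(\succ,(x_i,x_j))\leq u(\succ,x_i,\{x_i,x_j\})$ for all $\succ$ and $(x_i,x_j)\in A(\rhd)$; (2) $\sum_{(x_i,x_j)\in A(\rhd)}\pi(\succ,(x_i,x_j))\leq\binom{m}{2}R(\succ)$ for all $\succ$; (3) $\sum_\succ\pi(\succ,(x_i,x_j))\leq1$ for all $(x_i,x_j)\in A(\rhd)$; (4) $\sum_\succ\sum_{(x_i,x_j)\in A(\rhd)}\pi(\succ,(x_i,x_j))>\binom{m}{2}-1$. *)

(* Defs.v *)
From mathcomp Require Import all_boot all_order all_algebra all_fingroup.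
Set Implicit Arguments. Unset Strict Implicit. Unset Printing Implicit Defensive.
Import Order.TTheory GRing.Theory Num.Theory.
Local Open Scope ring_scope.

(* A ranking is encoded as a permutation
   s : {perm 'I_m}, where s x is the position of candidate x
   (position 0 = top).  x is preferred to y in s iff s x < s y.
   This is a bijection between {perm 'I_m} and strict linear orders on C. *)


Definition prefers m (s : {perm 'I_m}) (x y : 'I_m) : bool := (s x < s y)%N.

Definition is_profile (F : realFieldType) m (P : {perm 'I_m} -> F) : Prop :=
  (forall s, 0 <= P s) /\ \sum_(s : {perm 'I_m}) P s = 1.

Definition util m (s : {perm 'I_m}) (x : 'I_m) (X : {set 'I_m}) : nat :=
  #|[set y in X | (y != x) && prefers s x y]|.

Definition Util (F : realFieldType) m (b : {perm 'I_m} -> F) (x : 'I_m)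
  (X : {set 'I_m}) : F :=
  \sum_(s : {perm 'I_m}) b s * (util s x X)%:R.

(* An s-t flow in the network G_x (candidate set X, budgets b), described by
   its values g s y on the middle edges (v_s, v_y).  Flow on (s, v_s) is
   \sum_y g s y and on (v_y, t) is \sum_s g s y (flow conservation). *)
Definition is_flow (F : realFieldType) m (X : {set 'I_m}) (x : 'I_m)
  (b : {perm 'I_m} -> F) (g : {perm 'I_m} -> 'I_m -> F) : Prop :=
  [/\ (forall s y, 0 <= g s y),
      (forall s y, ~~ [&& y \in X, y != x & prefers s x y] -> g s y = 0),
      (forall s, \sum_(y : 'I_m) g s y <= b s)
    & (forall y, \sum_(s : {perm 'I_m}) g s y <= 1)].

Definition flow_value (F : realFieldType) m (g : {perm 'I_m} -> 'I_m -> F) : F :=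
  \sum_(s : {perm 'I_m}) \sum_(y : 'I_m) g s y.

Definition is_max_flow (F : realFieldType) m (X : {set 'I_m}) (x : 'I_m)
  (b : {perm 'I_m} -> F) (g : {perm 'I_m} -> 'I_m -> F) : Prop :=
  is_flow X x b g /\
  (forall g', is_flow X x b g' -> flow_value g' <= flow_value g).

(* remaining candidates X_i (rounds indexed from 0): those not yet placed *)
Definition remaining m (xs : 'I_m -> 'I_m) (i : nat) : {set 'I_m} :=
  [set y | [forall k : 'I_m, (k < i)%N ==> (xs k != y)]].

(* A run of the Flow-adjusting Borda rule on profile P, with arbitrary
   tie-breaking and arbitrary maximum flows: xs i is the candidate put at
   position i (0-based), b i the budgets b_{i+1} of the paper, g i the
   maximum flow chosen in round i. *)
Definition FAB_run (F : realFieldType) m (P : {perm 'I_m} -> F)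
  (xs : 'I_m -> 'I_m) (b : nat -> {perm 'I_m} -> F)
  (g : nat -> {perm 'I_m} -> 'I_m -> F) : Prop :=
  (forall s, b 0%N s = P s * ('C(m, 2))%:R) /\
  forall i : 'I_m,
    [/\ xs i \in remaining xs i,
        (forall y, y \in remaining xs i ->
           Util (b i) y (remaining xs i) <= Util (b i) (xs i) (remaining xs i)),
        is_max_flow (remaining xs i) (xs i) (b i) (g i)
      & (forall s, b i.+1 s = b i s - \sum_(y : 'I_m) g i s y)].

(* Pair-priceability of the ranking rk (rk x = position of x).
   A(rk) = pairs (x, y) with x ranked above y in rk. *)
Definition pair_priceable (F : realFieldType) m (P : {perm 'I_m} -> F)
  (rk : {perm 'I_m}) : Prop :=
  exists pi : {perm 'I_m} -> 'I_m -> 'I_m -> F,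
    [/\ (forall s x y, prefers rk x y -> 0 <= pi s x y <= 1),
        (forall s x y, prefers rk x y ->
           pi s x y <= (util s x [set x; y])%:R),
        (forall s, \sum_(x : 'I_m) \sum_(y : 'I_m | prefers rk x y) pi s x y
                     <= ('C(m, 2))%:R * P s),
        (forall x y, prefers rk x y -> \sum_(s : {perm 'I_m}) pi s x y <= 1)
      & \sum_(s : {perm 'I_m}) \sum_(x : 'I_m) \sum_(y : 'I_m | prefers rk x y)
            pi s x y > ('C(m, 2))%:R - 1].

(* Main.v *)
Require Import Defs.
From mathcomp Require Import all_boot all_order all_algebra all_fingroup.
From mathcomp Require Import ring lra zify.
Import Order.TTheory GRing.Theory Num.Theory.
Local Open Scope ring_scope.
Set Implicit Arguments. Unset Strict Implicit. Unset Printing Implicit Defensive.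
From Stdlib Require Import ClassicalEpsilon.

Lemma card_as_sum (T : finType) (Z : {set T}) (P : pred T) :
  #|[set y in Z | P y]| = (\sum_(y in Z) P y)%N.
Proof.
rewrite -sum1dep_card big_mkcondr /=; apply: eq_bigr => y _; by case: (P y).
Qed.

Lemma card_minus1 (T : finType) (Z : {set T}) z : z \in Z ->
  (\sum_(y in Z) (y != z))%N = (#|Z| - 1)%N.
Proof.
move=> zZ; rewrite -card_as_sum (cardsD1 z Z) zZ add1n subn1 /=.
by apply: eq_card => y; rewrite !inE andbC.
Qed.

Lemma pair_count m (s : {perm 'I_m}) (Z : {set 'I_m}) :
  (2 * \sum_(z in Z) util s z Z = #|Z| * (#|Z| - 1))%N.
Proof.
rewrite /util.
under eq_bigr do rewrite card_as_sum.
rewrite mul2n -addnn.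
rewrite [X in (_ + X)%N]exchange_big /= -big_split /=.
rewrite -sum_nat_const; apply: eq_bigr => z zZ.
rewrite -big_split /= -(card_minus1 zZ); apply: eq_bigr => y yZ.
rewrite /prefers eq_sym; case: (eqVneq z y) => [-> | ne] /=; first by rewrite ?eqxx ?ltnn.
have : s z != s y by rewrite (inj_eq perm_inj).
by case: (ltngtP (s z) (s y)) => // E; move/eqP: E; rewrite -(inj_eq val_inj) => ->.
Qed.

Lemma util_sub m (s : {perm 'I_m}) z (Z X : {set 'I_m}) :
  Z \subset X -> (util s z Z <= util s z X)%N.
Proof.
move=> sZX; apply: subset_leq_card; apply/subsetP => y.
by rewrite !inE => /andP[/(subsetP sZX) -> ->].
Qed.

Lemma util_max m (s : {perm 'I_m}) x (X : {set 'I_m}) :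
  x \in X -> (util s x X <= #|X| - 1)%N.
Proof.
move=> xX; rewrite (cardsD1 x X) xX add1n subn1 /=.
apply: subset_leq_card; apply/subsetP => y.
by rewrite !inE => /andP[-> /andP[-> _]].
Qed.

Lemma voter_lb1 m (s : {perm 'I_m}) (Z X : {set 'I_m}) :
  Z \subset X -> (#|Z| * (#|Z| - 1) <= 2 * \sum_(z in Z) util s z X)%N.
Proof.
move=> sZX; rewrite -(pair_count s) leq_mul2l /=; apply: leq_sum => z _.
exact: util_sub.
Qed.

Lemma voter_lb2 m (s : {perm 'I_m}) (Z X : {set 'I_m}) x :
  Z \subset X -> x \in Z ->
  (forall y, y \in X -> y != x -> prefers s x y -> y \notin Z) ->
  (#|Z| * (#|Z| - 1) + 2 * (#|Z| * util s x X)
      <= 2 * \sum_(z in Z) util s z X)%N.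
Proof.
move=> sZX xZ H; rewrite -(pair_count s) -mulnDr leq_mul2l /=.
rewrite -sum_nat_const -big_split /=; apply: leq_sum => z zZ.
set A1 := [set y in Z | (y != z) && prefers s z y].
set A2 := [set y in X | (y != x) && prefers s x y].
have dis : A1 :&: A2 = set0.
  apply/setP => y; rewrite !inE.
  apply/negP => /andP[/andP[yZ _] /andP[yX /andP[yx p]]].
  by move: (H y yX yx p); rewrite yZ.
have zx : (s z <= s x)%N.
  case: (eqVneq z x) => [-> // | nzx].
  rewrite leqNgt; apply/negP => p.
  by move: (H z (subsetP sZX z zZ) nzx p); rewrite zZ.
rewrite /util -/A1 -/A2 -cardsUI dis cards0 addn0.
apply: subset_leq_card; apply/subsetP => y; rewrite !inE.
case/orP => [/andP[/(subsetP sZX) -> ->] // | /andP[-> /andP[_ p]]].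
have lt : (s z < s y)%N by apply: leq_ltn_trans zx p.
rewrite /prefers lt andbT; apply/eqP => E; by rewrite E ltnn in lt.
Qed.

Definition edge m (X : {set 'I_m}) (x : 'I_m) (s : {perm 'I_m}) (y : 'I_m) :=
  [&& y \in X, y != x & prefers s x y].

Definition aug (F : realFieldType) m (X : {set 'I_m}) (x : 'I_m)
  (b : {perm 'I_m} -> F) (g : {perm 'I_m} -> 'I_m -> F) (y : 'I_m)
  (h : {perm 'I_m} -> 'I_m -> F) (e : F) : Prop :=
 0 < e /\ [/\ (forall s z, ~~ edge X x s z -> h s z = 0),
     (forall s z, 0 <= g s z + h s z),
     (forall s, \sum_z (g s z + h s z) <= b s),
     (forall z, z != y -> \sum_s h s z = 0)
   & \sum_s h s y = e].

Lemma conv (F : realFieldType) m (X : {set 'I_m}) (x : 'I_m)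
  (b : {perm 'I_m} -> F) (g : {perm 'I_m} -> 'I_m -> F) y h e c :
  is_flow X x b g -> aug X x b g y h e -> 0 <= c <= 1 ->
  (forall s z, 0 <= g s z + c * h s z) /\
  (forall s, \sum_z (g s z + c * h s z) <= b s).
Proof.
case=> g0 _ gr _ [e0 [_ h0 hr _ _]] /andP[c0 c1]; split.
  move=> s z; have := g0 s z; have := h0 s z; nra.
move=> s; rewrite big_split /= -mulr_sumr.
have := gr s; have := hr s; rewrite big_split /=; nra.
Qed.

Lemma sum_delta (F : realFieldType) (T : finType) (y : T) (a : F) :
  \sum_(z : T) (if z == y then a else 0) = a.
Proof. by rewrite -big_mkcond big_pred1_eq. Qed.

Inductive reach (F : realFieldType) m (X : {set 'I_m}) (x : 'I_m)
  (b : {perm 'I_m} -> F) (g : {perm 'I_m} -> 'I_m -> F) : 'I_m -> Prop :=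
| reach0 s y : \sum_z g s z < b s -> edge X x s y -> reach X x b g y
| reach1 s y y' : reach X x b g y' -> 0 < g s y' -> edge X x s y -> reach X x b g y.

Lemma reach_aug (F : realFieldType) m (X : {set 'I_m}) (x : 'I_m)
  (b : {perm 'I_m} -> F) (g : {perm 'I_m} -> 'I_m -> F) y :
  is_flow X x b g -> reach X x b g y -> exists h e, aug X x b g y h e.
Proof.
move=> fl; have [g0 gE gr gc] := fl.
elim=> {y}.
- move=> s y lt ed.
  pose d := b s - \sum_z g s z.
  exists (fun s' z => if (s' == s) && (z == y) then d else 0), d.
  have d0 : 0 < d by rewrite subr_gt0.
  split => //; split.
  + move=> s' z; case: eqP => [-> | //]; case: eqP => [-> | //].
    by rewrite ed.
  + move=> s' z; case: ifP => _; rewrite ?addr0 // addr_ge0 // ltW //.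
  + move=> s'; rewrite big_split /=.
    case: (eqVneq s' s) => [-> | ne] /=.
      rewrite -big_mkcond /= big_pred1_eq.
      by rewrite /d addrC subrK.
    by rewrite [X in _ + X]big1 ?addr0.
  + move=> z nz; apply: big1 => s' _; by rewrite (negbTE nz) andbF.
  + rewrite (bigD1 s) //= !eqxx big1 ?addr0 // => s' /negbTE ->; by [].
- move=> s y y' _ [h [e [e0 [hE h0 hr hc hy]]]] gp ed.
  have ed' : edge X x s y'.
    by apply/negPn/negP => /gE E; move: gp; rewrite E ltxx.
  case: (eqVneq y y') => [-> | ne]; first by exists h, e.
  pose c := g s y' / (2 * (e + g s y')).
  have den : 0 < 2 * (e + g s y') by rewrite mulr_gt0 // addr_gt0.
  have c0 : 0 < c by rewrite divr_gt0.
  have c1 : c <= 1/2.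
    rewrite /c ler_pdivrMr //.
    have -> : 1 / 2 * (2 * (e + g s y')) = e + g s y' by field.
    by rewrite lerDr ltW.
  have ce : c * e <= g s y' / 2.
    rewrite /c mulrAC ler_pdivrMr //.
    have -> : g s y' / 2 * (2 * (e + g s y')) = g s y' * (e + g s y') by field.
    by rewrite ler_pM2l // lerDl g0.
  have cc : 0 <= c <= 1.
    by rewrite ltW //= (le_trans c1) // ler_pdivrMr // mul1r ler1n.
  have [cn cr] := conv fl (conj e0 (And5 hE h0 hr hc hy)) cc.
  pose d := c * e.
  exists (fun s0 z => c * h s0 z + (if s0 == s then
            (if z == y then d else 0) - (if z == y' then d else 0) else 0)), d.
  have d0 : 0 < d by rewrite mulr_gt0.
  split => //; split.
  + move=> s0 z nE; rewrite hE // mulr0 add0r.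
    case: eqP => // Es; subst s0; case: eqP => [Ez|_]; first by move: nE; rewrite Ez ed.
    case: eqP => [Ez|_]; first by move: nE; rewrite Ez ed'.
    by rewrite subrr.
  + move=> s0 z; rewrite addrA.
    case: eqP => [Es | _]; last by rewrite addr0 cn.
    subst s0; case: eqP => [Ez | nzy]; first subst z.
      rewrite (negbTE ne) subr0 addr_ge0 // ?cn // ltW //.
    case: eqP => [Ez | _]; last by rewrite subrr addr0 cn.
    subst z.
    rewrite add0r.
    have := h0 s y'; have := g0 s y'; move: ce c1 c0; rewrite /d; nra.
  + move=> s0; rewrite big_split /=.
    rewrite big_split /= addrA.
    case: eqP => [Es | _].
      by subst s0; rewrite sumrB !sum_delta subrr addr0 -big_split cr.
    by rewrite [X in _ + X]big1 ?addr0 -?big_split ?cr.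
  + move=> z nz; rewrite big_split /= -mulr_sumr sum_delta.
    rewrite (negbTE nz) sub0r.
    case: (eqVneq z y') => [-> | nz'].
      by rewrite hy /d subrr.
    by rewrite hc // mulr0 subr0.
  + rewrite big_split /= -mulr_sumr sum_delta eqxx (negbTE ne) subr0.
    by rewrite hc // mulr0 add0r.
Qed.

Lemma reach_sat (F : realFieldType) m (X : {set 'I_m}) (x : 'I_m)
  (b : {perm 'I_m} -> F) (g : {perm 'I_m} -> 'I_m -> F) y :
  is_max_flow X x b g -> reach X x b g y -> \sum_s g s y = 1.
Proof.
move=> [fl mx] r; have [g0 gE gr gc] := fl.
have [h [e [e0 [hE h0 hr hc hy]]]] := reach_aug fl r.
apply/eqP; rewrite eq_le gc /=; rewrite leNgt; apply/negP => lt1.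
pose sl := 1 - \sum_s g s y.
have sl0 : 0 < sl by rewrite subr_gt0.
pose c := sl / (e + sl).
have es0 : 0 < e + sl by rewrite addr_gt0.
have c0 : 0 < c by rewrite divr_gt0.
have cc : 0 <= c <= 1 by rewrite ltW //= ler_pdivrMr // mul1r lerDr ltW.
have ce : c * e <= sl.
  rewrite /c mulrAC ler_pdivrMr // ler_pM2l // lerDl ltW //.
have [cn cr] := conv fl (conj e0 (And5 hE h0 hr hc hy)) cc.
have fl' : is_flow X x b (fun s z => g s z + c * h s z).
  split => //.
  - by move=> s z nE; rewrite gE // hE // mulr0 addr0.
  - move=> z; rewrite big_split /= -mulr_sumr.
    case: (eqVneq z y) => [-> | nz]; last by rewrite hc // mulr0 addr0.
    by rewrite hy -lerBrDl.
have := mx _ fl'; rewrite /flow_value.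
have -> : \sum_s \sum_y0 (g s y0 + c * h s y0) =
   \sum_s \sum_y0 g s y0 + c * e.
  have -> : e = \sum_z \sum_s h s z.
    rewrite [RHS](bigD1 y) //= hy big1 ?addr0 // => z /hc.
  rewrite [X in _ + c * X]exchange_big mulr_sumr -big_split /=; apply: eq_bigr => s _.
  by rewrite big_split /= -mulr_sumr.
by rewrite gerDl leNgt mulr_gt0.
Qed.

Definition reachb (F : realFieldType) m (X : {set 'I_m}) (x : 'I_m)
  (b : {perm 'I_m} -> F) (g : {perm 'I_m} -> 'I_m -> F) y : bool :=
  if excluded_middle_informative (reach X x b g y) then true else false.

Lemma reachbP (F : realFieldType) m (X : {set 'I_m}) (x : 'I_m)
  (b : {perm 'I_m} -> F) (g : {perm 'I_m} -> 'I_m -> F) y :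
  reflect (reach X x b g y) (reachb X x b g y).
Proof. by rewrite /reachb; case: excluded_middle_informative => ?; constructor. Qed.

Lemma reach_edge (F : realFieldType) m (X : {set 'I_m}) (x : 'I_m)
  (b : {perm 'I_m} -> F) (g : {perm 'I_m} -> 'I_m -> F) y :
  reach X x b g y -> (y \in X) && (y != x).
Proof. by case=> [s ? _ /and3P[-> -> _] | s ? ? _ _ /and3P[-> -> _]]. Qed.

Lemma round_unsat (F : realFieldType) m (X : {set 'I_m}) (x : 'I_m)
  (b : {perm 'I_m} -> F) (g : {perm 'I_m} -> 'I_m -> F) :
  x \in X -> (forall s, 0 <= b s) ->
  (forall y, y \in X -> Util b y X <= Util b x X) ->
  is_max_flow X x b g ->
  flow_value g < (#|X| - 1)%:R ->
  \sum_s (b s - \sum_y g s y) < (#|X| - 1)%:R.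
Proof.
move=> xX b0 bor mf vlt; have [fl _] := mf; have [g0 gE gr gc] := fl.
set rb := reachb X x b g.
pose Tb s := (\sum_z g s z < b s) || [exists y, rb y && (0 < g s y)].
have fa : forall s, ~~ Tb s -> \sum_z g s z = b s.
  move=> s; rewrite negb_or => /andP[H _]; apply/eqP; rewrite eq_le gr /=.
  by rewrite leNgt.
have fb : forall s y, Tb s -> edge X x s y -> rb y.
  move=> s y /orP[lt | /existsP[y' /andP[/reachbP r p]]] ed; apply/reachbP.
    exact: reach0 lt ed.
  exact: reach1 r p ed.
have fc : forall s y, rb y -> ~~ Tb s -> g s y = 0.
  move=> s y ry; rewrite negb_or => /andP[_ /existsPn /(_ y)].
  rewrite ry /= -leNgt => H; apply/eqP; by rewrite eq_le H g0.
have fd : forall s y, Tb s -> g s y != 0 -> rb y.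
  move=> s y Ts nz; apply: fb Ts _; apply/negPn/negP => /gE E.
  by rewrite E eqxx in nz.
have fe : forall y, rb y -> (y \in X) && (y != x).
  by move=> y /reachbP /reach_edge.
have fs : forall y, rb y -> \sum_s g s y = 1.
  by move=> y /reachbP; apply: reach_sat.
pose W := [set y | rb y].
pose Z := X :\: W.
have ZX : Z \subset X by apply/subsetP => z; rewrite inE => /andP[_ ->].
have xZ : x \in Z.
  rewrite inE xX andbT inE; apply/negP => /fe; by rewrite eqxx andbF.
have nqw : #|X| = (#|Z| + #|W|)%N.
  rewrite -(cardsID W X) addnC; congr (_ + _)%N.
  apply: eq_card => y; rewrite !inE; apply/andP/idP => [[//] | ry]; split=> //.
  by case/andP: (fe y ry).
pose beta := \sum_(s | Tb s) b s.
pose gamma := \sum_(s | ~~ Tb s) b s.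
have S1 : \sum_(s | Tb s) \sum_y g s y = #|W|%:R.
  transitivity (\sum_(s | Tb s) \sum_(y in W) g s y).
    apply: eq_bigr => s Ts; rewrite [RHS]big_mkcond /=; apply: eq_bigr => y _.
    rewrite inE; case: (boolP (rb y)) => // nr.
    by apply/eqP; apply: contraNT nr; apply: fd.
  rewrite exchange_big /= -sumr_const; apply: eq_bigr => y yW.
  rewrite inE in yW; rewrite -(fs y yW) [RHS](bigID Tb) /=.
  by rewrite [X in _ = _ + X]big1 ?addr0 // => s /(fc s y yW).
have Bp : \sum_s (b s - \sum_y g s y) = beta - #|W|%:R.
  rewrite (bigID Tb) /= [X in _ + X]big1 ?addr0; last by move=> s /fa ->; rewrite subrr.
  by rewrite sumrB S1.
have Vv : flow_value g = #|W|%:R + gamma.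
  rewrite /flow_value (bigID Tb) /= S1; congr (_ + _); apply: eq_bigr => s; exact: fa.
pose Sn s := (\sum_(z in Z) util s z X)%N.
pose un s := util s x X.
have hB : \sum_s (b s * (Sn s)%:R - b s * (#|Z| * un s)%:R) <= 0.
  rewrite sumrB subr_le0.
  have -> : \sum_s b s * (Sn s)%:R = \sum_(z in Z) Util b z X.
    rewrite /Util exchange_big /=; apply: eq_bigr => s _.
    by rewrite /Sn natr_sum mulr_sumr.
  have -> : \sum_s b s * (#|Z| * un s)%:R = #|Z|%:R * Util b x X.
    rewrite /Util mulr_sumr; apply: eq_bigr => s _.
    by rewrite natrM mulrCA.
  rewrite mulr_natl -sumr_const; apply: ler_sum => z zZ.
  exact: bor (subsetP ZX z zZ).
have q1 : (1 <= #|Z|)%N by rewrite card_gt0; apply/set0Pn; exists x.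
have n1 : (1 <= #|X|)%N by rewrite card_gt0; apply/set0Pn; exists x.
set Q : F := #|Z|%:R; set N : F := #|X|%:R; set Wr : F := #|W|%:R.
have NE : N = Q + Wr by rewrite /N nqw natrD.
have nm1 : (#|X| - 1)%:R = N - 1 :> F by rewrite natrB.
have KE : (#|Z| * (#|Z| - 1))%:R = Q * (Q - 1) :> F by rewrite natrM natrB.
have pv : forall s, Tb s ->
    b s * (Q * (Q - 1)) <= 2 * (b s * (Sn s)%:R - b s * (#|Z| * un s)%:R).
  move=> s Ts.
  have H := voter_lb2 (s:=s) ZX xZ.
  have {}H : (#|Z| * (#|Z| - 1) + 2 * (#|Z| * un s) <= 2 * Sn s)%N.
    apply: H => y yX yx p; rewrite inE negb_and negbK inE yX orbF.
    by apply: fb Ts _; rewrite /edge yX yx p.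
  move: H; rewrite -(ler_nat F) natrD KE !natrM -/Q.
  have := b0 s; nra.
have pn : forall s, ~~ Tb s ->
    b s * (Q * (Q - 1) - 2 * Q * (N - 1))
      <= 2 * (b s * (Sn s)%:R - b s * (#|Z| * un s)%:R).
  move=> s Ts.
  have H1 : Q * (Q - 1) <= 2 * (Sn s)%:R.
    by rewrite -KE -natrM ler_nat; exact: (voter_lb1 s ZX).
  have H2 : (#|Z| * un s)%:R <= Q * (N - 1).
    by rewrite -nm1 -natrM ler_nat leq_mul2l util_max ?orbT.
  have := b0 s; nra.
have hB2 : beta * (Q * (Q - 1)) + gamma * (Q * (Q - 1) - 2 * Q * (N - 1)) <= 0.
  have : 2 * \sum_s (b s * (Sn s)%:R - b s * (#|Z| * un s)%:R) <= 0.
    by rewrite pmulr_rle0.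
  apply: le_trans.
  rewrite mulr_sumr (bigID Tb) /= /beta /gamma !mulr_suml.
  by apply: lerD; apply: ler_sum => s Ts; [apply: pv | apply: pn].
rewrite Bp nm1; move: vlt; rewrite Vv nm1 => vlt.
have g0' : 0 <= gamma by apply: sumr_ge0.
have b0' : 0 <= beta by apply: sumr_ge0.
have W0 : 0 <= Wr by [].
have Q1 : 1 <= Q by rewrite ler1n.
rewrite NE in hB2 vlt *.
have gq : gamma < Q - 1 by lra.
have Q2 : 0 < Q - 1 by lra.
have K0 : 0 < Q * (Q - 1) by rewrite mulr_gt0 // (lt_le_trans ltr01).
have M0 : 0 < Q + 2 * Wr - 1 by lra.
have : gamma * (Q * (Q + 2 * Wr - 1)) < (Q - 1) * (Q * (Q + 2 * Wr - 1)).
  by rewrite ltr_pM2r // mulr_gt0 // (lt_le_trans ltr01).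
have E : Q * (Q - 1) - 2 * Q * (Q + Wr - 1) = - (Q * (Q + 2 * Wr - 1)) by ring.
rewrite E mulrN in hB2 => H.
have : beta * (Q * (Q - 1)) < (Q + 2 * Wr - 1) * (Q * (Q - 1)).
  have -> : (Q + 2 * Wr - 1) * (Q * (Q - 1)) = (Q - 1) * (Q * (Q + 2 * Wr - 1)) by ring.
  lra.
rewrite ltr_pM2r // => H'.
lra.
Qed.

Lemma bin2_ge k : (k <= 'C(k, 2) + 1)%N.
Proof. case: k => // k; rewrite binS bin1; lia. Qed.

Lemma round_full (F : realFieldType) m (X : {set 'I_m}) (x : 'I_m)
  (b : {perm 'I_m} -> F) (g : {perm 'I_m} -> 'I_m -> F) :
  x \in X -> (forall s, 0 <= b s) ->
  (forall y, y \in X -> Util b y X <= Util b x X) ->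
  is_max_flow X x b g ->
  \sum_s b s < ('C(#|X|, 2))%:R + 1 ->
  \sum_s (b s - \sum_y g s y) < ('C(#|X|.-1, 2))%:R + 1.
Proof.
move=> xX b0 bor mf lt.
have n1 : (0 < #|X|)%N by rewrite card_gt0; apply/set0Pn; exists x.
case: (ltP (flow_value g) (#|X| - 1)%:R) => [vlt | vge].
  apply: lt_le_trans (round_unsat xX b0 bor mf vlt) _.
  by have := bin2_ge (#|X|.-1); rewrite -(ler_nat F) natrD subn1.
rewrite sumrB -/(flow_value g).
move: lt; rewrite -(prednK n1) binS bin1 /= natrD subn1 /= in vge * => lt.
lra.
Qed.

Lemma le_sum_single (F : realFieldType) (T : finType) (f : T -> F) j :
  (forall i, 0 <= f i) -> f j <= \sum_i f i.
Proof. by move=> f0; rewrite (bigD1 j) //= lerDl sumr_ge0. Qed.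

Unset Implicit Arguments.

Theorem mainTheorem11 (F : realFieldType) (m : nat) (P : {perm 'I_m} -> F)
  (xs : 'I_m -> 'I_m) (b : nat -> {perm 'I_m} -> F)
  (g : nat -> {perm 'I_m} -> 'I_m -> F) :
  is_profile P -> FAB_run P xs b g ->
  forall rk : {perm 'I_m}, (forall i : 'I_m, rk (xs i) = i) ->
  pair_priceable P rk.
Proof.
move=> [P0 P1] [b0E hr] rk rkxs.
have xsrk : forall y, xs (rk y) = y.
  by move=> y; apply: (@perm_inj _ rk); rewrite rkxs.
have remP : forall (j : nat) y, (y \in remaining xs j) = (j <= rk y)%N.
  move=> j y; rewrite inE; apply/forallP/idP.
    move=> H; rewrite leqNgt; apply/negP => lt.
    by have := H (rk y); rewrite lt xsrk eqxx.
  move=> le k; apply/implyP => kj; apply/eqP => E.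
  by move: le; rewrite -E rkxs leqNgt kj.
have inv : forall j, (j <= m)%N ->
   (forall s, 0 <= b j s) /\
   \sum_s b j s < ('C(#|remaining xs j|, 2))%:R + 1.
  elim=> [_ | j IH lt].
    have -> : remaining xs 0 = setT by apply/setP => y; rewrite remP inE.
    rewrite cardsT card_ord; split.
      by move=> s; rewrite b0E mulr_ge0.
    under eq_bigr do rewrite b0E.
    by rewrite -mulr_suml P1 mul1r ltrDl.
  have [bj0 Bj] := IH (ltnW lt).
  have [xin bor mf bE] := hr (Ordinal lt).
  have [[g0 gE gr gc] _] := mf.
  have cardE : #|remaining xs j.+1| = #|remaining xs j|.-1.
    rewrite [in RHS](cardsD1 (xs (Ordinal lt))) xin add1n /=.
    apply: eq_card => y; rewrite in_setD1 !remP eq_sym.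
    have -> : (xs (Ordinal lt) == y) = (rk y == j :> nat).
      apply/eqP/eqP => [<- | E]; first by rewrite rkxs.
      by rewrite -(xsrk y); congr xs; apply: val_inj; rewrite /= E.
    by rewrite ltn_neqAle eq_sym andbC.
  split.
    move=> s; rewrite bE subr_ge0; exact: gr.
  under eq_bigr do rewrite bE.
  rewrite cardE; exact: (round_full xin bj0 bor mf Bj).
have [bm0 Bm] := inv m (leqnn m).
have Bm1 : \sum_s b m s < 1.
  move: Bm; suff -> : #|remaining xs m| = 0%N by rewrite bin0n add0r.
  apply/eqP; rewrite cards_eq0; apply/eqP/setP => y.
  by rewrite remP inE leqNgt ltn_ord.
have rowE : forall (i : 'I_m) s, \sum_y g i s y = b i s - b i.+1 s.
  move=> i s; have [_ _ _ bE] := hr i; rewrite bE; ring.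
have tot : forall s, \sum_(i < m) \sum_y g i s y = b 0%N s - b m s.
  move=> s; under eq_bigr do rewrite rowE.
  rewrite -(big_mkord xpredT (fun i => b i s - b i.+1 s)).
  transitivity (- \sum_(0 <= i < m) (b i.+1 s - b i s)).
    by rewrite -sumrN; apply: eq_bigr => i _; rewrite opprB.
  by rewrite telescope_sumr // opprB.
have E1 : forall s x, \sum_(y | prefers rk x y) g (rk x) s y = \sum_y g (rk x) s y.
  move=> s x; rewrite [RHS](bigID (prefers rk x)) /= [X in _ = _ + X]big1 ?addr0 //.
  move=> y np; have [_ _ mf _] := hr (rk x); have [[_ gE _ _] _] := mf.
  apply: gE; apply/negP => /and3P[yin ny _].
  move: np; rewrite remP in yin; rewrite xsrk in ny.
  rewrite /prefers ltn_neqAle yin andbT; apply/negP/negPn.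
  apply: contra ny => /eqP E; apply/eqP; apply: (@perm_inj _ rk).
  by apply: val_inj; rewrite /= E.
have Ri : forall s, \sum_x \sum_(y | prefers rk x y) g (rk x) s y = b 0%N s - b m s.
  move=> s; under eq_bigr do rewrite E1.
  by rewrite -tot [RHS](reindex_inj (@perm_inj _ rk)).
exists (fun s x y => g (rk x) s y); split.
- move=> s x y _; have [_ _ mf _] := hr (rk x); have [[g0 _ _ gc] _] := mf.
  rewrite g0 /=; apply: le_trans (gc y); exact: le_sum_single.
- move=> s x y p; have [_ _ mf _] := hr (rk x); have [[g0 gE _ gc] _] := mf.
  case: (eqVneq (g (rk x) s y) 0) => [-> | nz]; first by rewrite ler0n.
  have : [&& y \in remaining xs (rk x), y != xs (rk x) & prefers s (xs (rk x)) y].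
    by apply/negPn/negP => /gE E; rewrite E eqxx in nz.
  move/and3P => [_ _]; rewrite xsrk => ps.
  apply: (le_trans (le_trans (le_sum_single (f := fun i => g (rk x) i y) s (fun i => g0 i y)) (gc y))).
  rewrite ler1n card_gt0; apply/set0Pn; exists y.
  rewrite !inE eqxx orbT ps andbT /=; apply/eqP => E; by rewrite E /prefers ltnn in p.
- by move=> s; rewrite Ri b0E mulrC gerBl bm0.
- move=> x y _; have [_ _ mf _] := hr (rk x); have [[_ _ _ gc] _] := mf; exact: gc.
- under eq_bigr do rewrite Ri.
  rewrite sumrB; under eq_bigr do rewrite b0E.
  rewrite -mulr_suml P1 mul1r; lra.
Qed.
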